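(* Let $G$ be a finitely generated group hyperbolic relative to a finite collection $\mathcal P$, $S$ a finite generating set, and $(\epsilon,R,D)$ thin-triangle constants. Let $\mu$ be a positive integer and $U\subset V\cup W$ a finite subset with $|u,u'|_S\le\mu$ for all $u,u'\in U$. Then for every integer $r\ge\mu$, the $r$-hull $U_r$ is $(\mu+2D)$-convex with respect to every $b\in U$.
   Context: $\Gamma$ is the Cayley graph of $G$ w.r.t. $S$, $V=G$, $W$ the set of cosets $gP_\lambda$; relative hyperbolicity means the coned-off Cayley graph (vertex set $V\cup W$, edges of $\Gamma$ plus edges $(v,w)$ for $v\in w$) is fine and $\delta$-hyperbolic. $|\cdot,\cdot|_S$ is extended to $V\cup W$ via distances in $\Gamma$ between corresponding elements/cosets. For a geodesic edge-path $p=(p_j)_{j=0}^\ell$ in $\Gamma$, $p_i$ is $(\epsilon,R)$-deep in $w\in W$ if $R\le i\le\ell-R$ and $|p_j,w|_S\le\epsilon$ for all $|j-i|\le R$. A geodesic from $a$ to $b$ ($a,b\in V\cup W$) is a geodesic in $\Gamma$ of length $|a,b|_S$ starting at $a$ (if $a\in V$) or in $a$ (if $a\in W$), ending analogously at $b$; for $i>\ell$, $p_i:=p_\ell$. Positive integers $(\epsilon,R,D)$ are thin-triangle constants if: $D\ge\epsilon$; no vertex of a geodesic in $\Gamma$ is $(\epsilon,R)$-deep in two distinct cosets; and for all $a,b,c\in V\cup W$ with $a\ne b$, geodesics $p^{ab},p^{bc},p^{ac}$, $\ell=|a,b|_S$, $0\le i\le\ell$, with $z=w$ if $p^{ab}_i$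 is $(\epsilon,R)$-deep in $w$ and $z=p^{ab}_i$ otherwise, we have $|z,p^{ac}_i|_S\le D$ or $|z,p^{bc}_{\ell-i}|_S\le D$. The $r$-hull $U_r$ of finite $U$ is the union of all $v\in V$ with $|v,u|_S\le r$ for every $u\in U$ and all $w\in W$ with $|w,u|_S\le r+\epsilon$ for every $u\in U$. A subset $U'\subset V\cup W$ is $\nu$-convex with respect to $u\in U'$ if for every $u'\in U'$, every geodesic $(p_j)_{j=0}^\ell$ from $u$ to $u'$ in $\Gamma$ and every $j\le\ell-\nu$: $p_j\in U'$, and every $w\in W$ with $|w,p_j|_S\le\epsilon$ lies in $U'$. *)

(* Defs.v *)
From Stdlib Require Import List Arith.
Import ListNotations.

Record Grp := {
  gcar :> Type;
  gmul : gcar -> gcar -> gcar;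
  gone : gcar;
  ginv : gcar -> gcar;
  gassoc : forall x y z, gmul x (gmul y z) = gmul (gmul x y) z;
  gmul1 : forall x, gmul gone x = x;
  gmulV : forall x, gmul (ginv x) x = gone }.

(** Walks in a graph with adjacency relation E: [walk E x l y] means
    x, l_1, ..., l_k is a walk ending at y = l_k (or y = x if l = []);
    it has [length l] edges. *)
Fixpoint walk {X : Type} (E : X -> X -> Prop) (x : X) (l : list X) (y : X) : Prop :=
  match l with
  | [] => x = y
  | z :: l' => E x z /\ walk E z l' y
  end.

Definition gdist_le {X : Type} (E : X -> X -> Prop) (x y : X) (n : nat) : Prop :=
  exists l, walk E x l y /\ length l <= n.

Section RelHyp.
Context {G : Grp} (gens : list G) {Lam : Type} {P : Lam -> G -> Prop}.

Definition generates : Prop :=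
  forall g : G, exists l : list (G * bool),
    (forall x b, In (x, b) l -> In x gens) /\
    g = fold_right (fun (xb : G * bool) (acc : G) => gmul G (if snd xb then fst xb else ginv G (fst xb)) acc)
                   (gone G) l.

Definition is_subgroup (H : G -> Prop) : Prop :=
  H (gone G) /\ (forall x y, H x -> H y -> H (gmul G x y)) /\ (forall x, H x -> H (ginv G x)).

Definition adjG (x y : G) : Prop :=
  exists s, In s gens /\ (y = gmul G x s \/ x = gmul G y s).

(** Cosets g P_lambda, recorded together with their index lambda. *)
Definition isCoset (c : Lam * (G -> Prop)) : Prop :=
  exists g : G, forall x, snd c x <-> P (fst c) (gmul G (ginv G g) x).

Definition W : Type := { c : Lam * (G -> Prop) | isCoset c }.

Definition X : Type := (G + W)%type.

Definition inX (a : X) (x : G) : Prop :=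
  match a with
  | inl v => x = v
  | inr w => snd (proj1_sig w) x
  end.

Definition distS_le (a b : X) (n : nat) : Prop :=
  exists x y, inX a x /\ inX b y /\ gdist_le adjG x y n.

Definition distS_eq (a b : X) (n : nat) : Prop :=
  distS_le a b n /\ forall m, distS_le a b m -> n <= m.

(** A geodesic edge path (p_j)_{j=0}^l in Gamma, extended by p_i := p_l for i > l. *)
Definition geod (l : nat) (p : nat -> G) : Prop :=
  (forall j, j < l -> adjG (p j) (p (Datatypes.S j))) /\
  (forall m, gdist_le adjG (p 0) (p l) m -> l <= m) /\
  (forall i, l <= i -> p i = p l).

Definition geod_from (a b : X) (l : nat) (p : nat -> G) : Prop :=
  geod l p /\ inX a (p 0) /\ inX b (p l) /\ distS_eq a b l.

Definition deep (eps R l : nat) (p : nat -> G) (i : nat) (w : W) : Prop :=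
  R <= i /\ i + R <= l /\
  forall j, j <= i + R -> i <= j + R -> distS_le (inr w) (inl (p j)) eps.

Definition z_of (eps R l : nat) (p : nat -> G) (i : nat) (z : X) : Prop :=
  (exists w, deep eps R l p i w /\ z = inr w) \/
  ((forall w, ~ deep eps R l p i w) /\ z = inl (p i)).

Definition thin_triangle_constants (eps R D : nat) : Prop :=
  0 < eps /\ 0 < R /\ 0 < D /\ eps <= D /\
  (forall l p, geod l p -> forall i w w',
      deep eps R l p i w -> deep eps R l p i w' -> w = w') /\
  (forall a b c : X, a <> b ->
     forall lab pab lbc pbc lac pac,
       geod_from a b lab pab -> geod_from b c lbc pbc -> geod_from a c lac pac ->
       forall i, i <= lab ->
       forall z : X, z_of eps R lab pab i z ->
         distS_le z (inl (pac i)) D \/ distS_le z (inl (pbc (lab - i))) D).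

Definition adjC (a b : X) : Prop :=
  match a, b with
  | inl x, inl y => adjG x y
  | inl x, inr w => inX (inr w) x
  | inr w, inl x => inX (inr w) x
  | inr _, inr _ => False
  end.

Definition circuit (c : list X) : Prop :=
  3 <= length c /\ NoDup c /\
  match c with
  | [] => False
  | x0 :: rest => walk adjC x0 (rest ++ [x0]) x0
  end.

(** fine: every edge lies in finitely many circuits of each length
    (circuits through the edge {x,y} normalised to start with x, y) *)
Definition fine : Prop :=
  forall x y, adjC x y -> forall n : nat,
    exists L : list (list X), forall c, circuit c -> length c = n ->
      (exists rest, c = x :: y :: rest) -> In c L.

Definition geodC (a : X) (l : list X) (b : X) : Prop :=
  walk adjC a l b /\ forall m, gdist_le adjC a b m -> length l <= m.

Definition hyperbolic (delta : nat) : Prop :=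
  forall a b c p q r, geodC a p b -> geodC b q c -> geodC a r c ->
    forall x, In x (a :: p) ->
      exists y, (In y (b :: q) \/ In y (a :: r)) /\ gdist_le adjC x y delta.

Definition rel_hyp : Prop :=
  generates /\ (forall lam, is_subgroup (P lam)) /\
  (exists lst : list Lam, forall lam, In lam lst) /\
  fine /\ exists delta, hyperbolic delta.

Definition hull (eps : nat) (U : list X) (r : nat) (a : X) : Prop :=
  match a with
  | inl v => forall u, In u U -> distS_le (inl v) u r
  | inr w => forall u, In u U -> distS_le (inr w) u (r + eps)
  end.

Definition convex (eps : nat) (U' : X -> Prop) (nu : nat) (u : X) : Prop :=
  forall u', U' u' -> forall l p, geod_from u u' l p ->
    forall j, j + nu <= l ->
      U' (inl (p j)) /\ (forall w : W, distS_le (inr w) (inl (p j)) eps -> U' (inr w)).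

End RelHyp.

(* Main.v *)
Require Import Defs.
From Stdlib Require Import List Arith Lia Classical.
Import ListNotations.

Lemma walk_app {T} (E : T -> T -> Prop) x l1 y l2 z :
  walk E x l1 y -> walk E y l2 z -> walk E x (l1 ++ l2) z.
Proof. revert x; induction l1 as [|a l1 IH]; simpl; intros x H1 H2.
  - subst; exact H2.
  - destruct H1 as [Ha Hw]; split; [exact Ha| eapply IH; eauto]. Qed.

Lemma gdist_trans {T} (E : T -> T -> Prop) x y z a b :
  gdist_le E x y a -> gdist_le E y z b -> gdist_le E x z (a + b).
Proof. intros [l1 [H1 L1]] [l2 [H2 L2]]. exists (l1 ++ l2); split.
  eapply walk_app; eauto. rewrite length_app; lia. Qed.

Lemma gdist_mono {T} (E : T -> T -> Prop) x y a b :
  gdist_le E x y a -> a <= b -> gdist_le E x y b.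
Proof. intros [l [H L]] Hab; exists l; split; auto; lia. Qed.

Lemma gdist_refl {T} (E : T -> T -> Prop) x : gdist_le E x x 0.
Proof. exists []; simpl; split; auto. Qed.

Lemma gdist_step {T} (E : T -> T -> Prop) x y : E x y -> gdist_le E x y 1.
Proof. intros H; exists [y]; simpl; auto. Qed.

Lemma walk_rev {T} (E : T -> T -> Prop) (Hs : forall a b, E a b -> E b a) x l y :
  walk E x l y -> gdist_le E y x (length l).
Proof. revert x; induction l as [|z l IH]; simpl; intros x H.
  - subst; apply gdist_refl.
  - destruct H as [Hxz Hw]. replace (S (length l)) with (length l + 1) by lia.
    eapply gdist_trans; [apply IH; exact Hw| apply gdist_step; auto]. Qed.

Lemma gdist_sym {T} (E : T -> T -> Prop) (Hs : forall a b, E a b -> E b a) x y n :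
  gdist_le E x y n -> gdist_le E y x n.
Proof. intros [l [H L]]. eapply gdist_mono; [eapply walk_rev; eauto| exact L]. Qed.

Lemma path_dist {T} (E : T -> T -> Prop) (l : nat) (p : nat -> T) :
  (forall j, j < l -> E (p j) (p (S j))) -> (forall i, l <= i -> p i = p l) ->
  forall k i, i <= k -> gdist_le E (p i) (p k) (k - i).
Proof.
  intros Hadj Hext k; induction k as [|k IH]; intros i Hi.
  - assert (i = 0) by lia; subst; apply gdist_refl.
  - destruct (Nat.eq_dec i (S k)) as [->|Hne].
    + rewrite Nat.sub_diag; apply gdist_refl.
    + assert (Hik : i <= k) by lia. specialize (IH i Hik).
      destruct (Nat.lt_ge_cases k l) as [Hkl|Hkl].
      * replace (S k - i) with (k - i + 1) by lia.
        eapply gdist_trans; [exact IH| apply gdist_step; auto].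
      * rewrite (Hext (S k)) by lia. rewrite <- (Hext k Hkl).
        eapply gdist_mono; [exact IH| lia].
Qed.

Fixpoint pathf {T} (x : T) (L : list T) (i : nat) : T :=
  match i, L with
  | 0, _ => x
  | S i', z :: L' => pathf z L' i'
  | S _, [] => x
  end.

Lemma pathf_0 {T} (x : T) L : pathf x L 0 = x.
Proof. destruct L; reflexivity. Qed.

Lemma pathf_end {T} (E : T -> T -> Prop) x L y :
  walk E x L y -> pathf x L (length L) = y.
Proof. revert x; induction L as [|z L IH]; simpl; intros x H; [auto| apply IH; apply H]. Qed.

Lemma pathf_beyond {T} (x : T) L : forall i, length L <= i -> pathf x L i = pathf x L (length L).
Proof. revert x; induction L as [|z L IH]; simpl; intros x i Hi.
  - destruct i; reflexivity.
  - destruct i as [|i]; [lia|]. simpl. apply IH; lia. Qed.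

Lemma pathf_adj {T} (E : T -> T -> Prop) x L y :
  walk E x L y -> forall j, j < length L -> E (pathf x L j) (pathf x L (S j)).
Proof. revert x; induction L as [|z L IH]; simpl; intros x H j Hj; [lia|].
  destruct H as [Hxz Hw]. destruct j as [|j]; simpl.
  - destruct L; exact Hxz.
  - apply (IH z Hw j). lia. Qed.

Lemma min_exists (Q : nat -> Prop) n : Q n -> exists m, Q m /\ forall k, Q k -> m <= k.
Proof.
  induction n as [n IH] using (well_founded_induction lt_wf). intros Hn.
  destruct (classic (exists k, k < n /\ Q k)) as [[k [Hk Qk]]|Hno].
  - exact (IH k Hk Qk).
  - exists n; split; auto. intros k Qk. destruct (Nat.lt_ge_cases k n); auto.
    exfalso; apply Hno; eauto.
Qed.

Section Aux.
Context {G : Grp} (gens : list G) {Lam : Type} {P : Lam -> G -> Prop}.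

Lemma adjG_sym : forall a b, @adjG G gens a b -> @adjG G gens b a.
Proof. intros a b [s [Hs [H|H]]]; exists s; split; auto. Qed.

Lemma distS_mono (a b : @X G Lam P) n m :
  @distS_le G gens Lam P a b n -> n <= m -> @distS_le G gens Lam P a b m.
Proof. intros (x & y & Hx & Hy & Hd) Hnm. exists x, y; repeat split; auto.
  eapply gdist_mono; eauto. Qed.

Lemma distS_sym (a b : @X G Lam P) n :
  @distS_le G gens Lam P a b n -> @distS_le G gens Lam P b a n.
Proof. intros (x & y & Hx & Hy & Hd). exists y, x; repeat split; auto.
  apply gdist_sym; auto. apply adjG_sym. Qed.

Lemma geod_exists (a c : @X G Lam P) n :
  @distS_le G gens Lam P a c n -> exists l p, @geod_from G gens Lam P a c l p.
Proof.
  intros Hn. destruct (min_exists _ n Hn) as (m & Hm & Hmin).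
  destruct Hm as (x & y & Hx & Hy & L & HL & Hlen).
  assert (HmL : m <= length L).
  { apply Hmin. exists x, y. split; [exact Hx|split; [exact Hy|]]. exists L; split; auto. }
  exists (length L), (pathf x L). repeat split.
  - apply (pathf_adj _ _ _ _ HL).
  - intros m' Hd. rewrite (pathf_end _ _ _ _ HL), pathf_0 in Hd.
    assert (m <= m'). { apply Hmin. exists x, y. split; [exact Hx|split; [exact Hy| exact Hd]]. } lia.
  - intros i Hi. apply pathf_beyond; auto.
  - rewrite pathf_0; exact Hx.
  - rewrite (pathf_end _ _ _ _ HL); exact Hy.
  - exists x, y. split; [exact Hx|split; [exact Hy|]]. exists L; split; auto.
  - intros k Hk. specialize (Hmin k Hk). lia.
Qed.

End Aux.

Theorem lemma3p10 (G : Grp) (S : list G) (Lam : Type) (P : Lam -> G -> Prop)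
  (Hrh : @rel_hyp G S Lam P)
  (eps R D : nat) (HT : @thin_triangle_constants G S Lam P eps R D)
  (mu : nat) (Hmu : 0 < mu) (U : list (@X G Lam P))
  (HU : forall u u', In u U -> In u' U -> @distS_le G S Lam P u u' mu) :
  forall r : nat, mu <= r ->
  forall b, In b U ->
    @convex G S Lam P eps (@hull G S Lam P eps U r) (mu + 2 * D) b.
Proof.
  intros r Hr b Hb u' Hu' l p Hp j Hj.
  destruct HT as (Heps & HR & HD & HepsD & Huniq & Htri).
  assert (Hu'r : forall v, In v U -> @distS_le G S Lam P u' v (r + eps)).
  { destruct u' as [v|w]; simpl in Hu'; intros v' Hv'.
    - eapply distS_mono; [apply Hu'; auto| lia].
    - apply Hu'; auto. }
  assert (Hclaim : forall u, In u U -> @distS_le G S Lam P (inl (p j)) u r).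
  { intros u Hu.
    pose proof Hp as Hp'.
    destruct Hp as (Hg & Hp0 & Hpl & Heq).
    destruct Hg as (Hadj & Hgmin & Hext).
    assert (Hlr : l <= r + eps).
    { apply (proj2 Heq). apply distS_sym. apply Hu'r; auto. }
    assert (Hne : b <> u').
    { intros E; subst u'.
      assert (l <= 0). { apply (proj2 Heq). exists (p 0), (p 0); repeat split; auto.
        apply gdist_refl. }
      lia. }
    destruct (geod_exists S u' u (r + eps) (Hu'r u Hu)) as (lbc & pbc & Hbc).
    destruct (geod_exists S b u mu (HU b u Hb Hu)) as (lac & pac & Hac).
    assert (Hz : @z_of G S Lam P eps R l p 0 (inl (p 0))).
    { right; split; [intros w [H0 _]; lia| reflexivity]. }
    pose proof (Htri b u' u Hne l p lbc pbc lac pac Hp' Hbc Hac 0 (Nat.le_0_l _) _ Hz) as Hc.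
    assert (Hpj : gdist_le (adjG S) (p j) (p 0) j).
    { apply gdist_sym; [apply adjG_sym|].
      pose proof (path_dist _ l p Hadj Hext j 0 (Nat.le_0_l _)) as H0. rewrite Nat.sub_0_r in H0; exact H0. }
    destruct Hc as [Hc|Hc].
    - destruct Hc as (x & y & Hx & Hy & Hd); simpl in Hx, Hy; subst x y.
      destruct Hac as ((Hacadj & _ & Hacext) & Hac0 & Hacl & Haceq).
      assert (Hlac : lac <= mu) by (apply (proj2 Haceq); apply HU; auto).
      assert (Hpp : gdist_le (adjG S) (pac 0) (pac lac) lac).
      { pose proof (path_dist _ lac pac Hacadj Hacext lac 0 (Nat.le_0_l _)) as H0. rewrite Nat.sub_0_r in H0; exact H0. }
      exists (p j), (pac lac). split; [reflexivity|split; [exact Hacl|]].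
      eapply gdist_mono; [eapply gdist_trans; [eapply gdist_trans; [exact Hpj| exact Hd]| exact Hpp]|].
      lia.
    - rewrite Nat.sub_0_r in Hc.
      destruct Hc as (x & y & Hx & Hy & Hd); simpl in Hx, Hy; subst x y.
      destruct Hbc as ((Hbcadj & _ & Hbcext) & Hbc0 & Hbcl & Hbceq).
      assert (Hlbc : lbc <= r + eps) by (apply (proj2 Hbceq); apply Hu'r; auto).
      assert (Hpp : gdist_le (adjG S) (pbc l) (pbc (Nat.max l lbc)) (Nat.max l lbc - l)).
      { apply (path_dist _ lbc); auto; lia. }
      rewrite (Hbcext (Nat.max l lbc)) in Hpp by lia.
      exists (p j), (pbc lbc). split; [reflexivity|split; [exact Hbcl|]].
      eapply gdist_mono; [eapply gdist_trans; [eapply gdist_trans; [exact Hpj| exact Hd]| exact Hpp]|].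
      lia. }
  split.
  - exact Hclaim.
  - intros w Hw u Hu. destruct (Hclaim u Hu) as (x & y & Hx & Hy & Hd).
    destruct Hw as (x' & y' & Hx' & Hy' & Hd'). simpl in Hx, Hy'. subst.
    exists x', y. split; [exact Hx'|split; [exact Hy|]].
    eapply gdist_mono; [eapply gdist_trans; [exact Hd'| exact Hd]| lia].
Qed.
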